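(* Let $m\ge1$ and $g_1,g_2\in\Gamma_{2m}(2)$. Suppose there exist $Z_1\in g_1\cdot iC_n$, $Z_2\in g_2\cdot iC_n$ and $\gamma\in\Gamma(4m)$ with $\gamma Z_1=Z_2$. Then there exists $\alpha\in\Gamma_\ell(2)$ such that $g_2=\gamma g_1\alpha$.
   Context: $\mathbf{Sp}(2n,\mathbb R)$: real matrices $g=\begin{pmatrix}A&B\\C&D\end{pmatrix}$ with ${}^tgJg=J$, $J=\begin{pmatrix}0&I\\-I&0\end{pmatrix}$, acting on $\mathfrak h_n=\{Z\in M_n(\mathbb C):{}^tZ=Z,\mathrm{Im}Z>0\}$ by $gZ=(AZ+B)(CZ+D)^{-1}$. $\Gamma(4m)=\{\gamma\in\mathbf{Sp}(2n,\mathbb Z):\gamma\equiv I\bmod4m\}$; $\Gamma_{2m}(2)=\{\begin{pmatrix}A&B\\C&D\end{pmatrix}\in\mathbf{Sp}(2n,\mathbb Z):A,D\equiv I\bmod2,\ B,C\equiv0\bmod2m\}$; $\Gamma_\ell(2)=\{U\in\mathbf{GL}(n,\mathbb Z):U\equiv I\bmod2\}$ embedded via $U\mapsto\mathrm{diag}(U,{}^tU^{-1})$. $C_n$: positive definite symmetric real $n\times n$ matrices; $iC_n=\{iY:Y\in C_n\}$. *)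

(* Defs.v *)
From HB Require Import structures.
From mathcomp Require Import all_boot all_order all_algebra.
From mathcomp Require Import reals complex.
Set Implicit Arguments. Unset Strict Implicit. Unset Printing Implicit Defensive.
Import Order.TTheory GRing.Theory Num.Theory.
Local Open Scope ring_scope.

Definition Jmx (T : pzRingType) (n : nat) : 'M[T]_(n + n) :=
  block_mx 0 1%:M (- 1%:M) 0.

Definition symplectic (T : pzRingType) (n : nat) (g : 'M[T]_(n + n)) : Prop :=
  g^T *m Jmx T n *m g = Jmx T n.

Definition mxcong (p q : nat) (k : int) (A B : 'M[int]_(p, q)) : Prop :=
  forall i j, (A i j = B i j %[mod k])%Z.

Definition SpZ (n : nat) (g : 'M[int]_(n + n)) : Prop := symplectic g.

Definition Gamma_princ (n m : nat) (g : 'M[int]_(n + n)) : Prop :=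
  SpZ g /\ mxcong (4 * m)%:Z g 1%:M.

Definition Gamma_2m_2 (n m : nat) (g : 'M[int]_(n + n)) : Prop :=
  [/\ SpZ g,
      mxcong 2 (ulsubmx g) 1%:M, mxcong 2 (drsubmx g) 1%:M,
      mxcong (2 * m)%:Z (ursubmx g) 0 & mxcong (2 * m)%:Z (dlsubmx g) 0].

Definition Gamma_l_2 (n : nat) (U : 'M[int]_n) : Prop :=
  U \in unitmx /\ mxcong 2 U 1%:M.

Definition embedGL (n : nat) (U : 'M[int]_n) : 'M[int]_(n + n) :=
  block_mx U 0 0 (invmx U^T).

(* C_n : positive definite symmetric real n x n matrices *)
Definition posdef (R : realType) (n : nat) (Y : 'M[R]_n) : Prop :=
  Y^T = Y /\ forall v : 'cV[R]_n, v != 0 -> 0 < (v^T *m Y *m v) 0 0.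

Definition cmx_of_int (R : realType) (p q : nat) (A : 'M[int]_(p, q))
  : 'M[R[i]]_(p, q) := map_mx (fun x : int => x%:~R) A.

Definition imx (R : realType) (n : nat) (Y : 'M[R]_n) : 'M[R[i]]_n :=
  map_mx (fun y : R => Complex 0 y) Y.

Definition sp_act (R : realType) (n : nat) (g : 'M[int]_(n + n))
    (Z : 'M[R[i]]_n) : 'M[R[i]]_n :=
  let gc := cmx_of_int R g in
  (ulsubmx gc *m Z + ursubmx gc) *m invmx (dlsubmx gc *m Z + drsubmx gc).

Definition in_orbit_iC (R : realType) (n : nat) (g : 'M[int]_(n + n))
    (Z : 'M[R[i]]_n) : Prop :=
  exists Y : 'M[R]_n, posdef Y /\ Z = sp_act g (imx Y).

(* Main.v *)
Require Import Defs.
From HB Require Import structures.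
From mathcomp Require Import all_boot all_order all_algebra.
From mathcomp Require Import reals complex.
From mathcomp Require Import ring lra zify.
Set Implicit Arguments. Unset Strict Implicit. Unset Printing Implicit Defensive.
Import Order.TTheory GRing.Theory Num.Theory.
Local Open Scope ring_scope.

Definition mRe (R : realType) p q (M : 'M[R[i]]_(p, q)) : 'M[R]_(p, q) :=
  map_mx (@complex.Re R) M.
Definition mIm (R : realType) p q (M : 'M[R[i]]_(p, q)) : 'M[R]_(p, q) :=
  map_mx (@complex.Im R) M.
Definition intR (R : realType) p q (A : 'M[int]_(p, q)) : 'M[R]_(p, q) :=
  map_mx (fun x : int => x%:~R) A.

Lemma mRe_add (R : realType) p q (M N : 'M[R[i]]_(p, q)) :
  mRe (M + N) = mRe M + mRe N.
Proof. by apply/matrixP => i j; rewrite !mxE; case: (M i j) => a b; case: (N i j). Qed.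
Lemma mIm_add (R : realType) p q (M N : 'M[R[i]]_(p, q)) :
  mIm (M + N) = mIm M + mIm N.
Proof. by apply/matrixP => i j; rewrite !mxE; case: (M i j) => a b; case: (N i j). Qed.

Lemma Re_sum (R : realType) (I : Type) (r : seq I) (P : pred I) (F : I -> R[i]) :
  complex.Re (\sum_(i <- r | P i) F i) = \sum_(i <- r | P i) complex.Re (F i).
Proof.
apply: (big_morph (@complex.Re R)) => // x y; by case: x => a b; case: y.
Qed.
Lemma Im_sum (R : realType) (I : Type) (r : seq I) (P : pred I) (F : I -> R[i]) :
  complex.Im (\sum_(i <- r | P i) F i) = \sum_(i <- r | P i) complex.Im (F i).
Proof.
apply: (big_morph (@complex.Im R)) => // x y; by case: x => a b; case: y.
Qed.

Lemma mRe_mul (R : realType) p q r (M : 'M[R[i]]_(p, q)) (N : 'M[R[i]]_(q, r)) :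
  mRe (M *m N) = mRe M *m mRe N - mIm M *m mIm N.
Proof.
apply/matrixP => i j; rewrite !mxE Re_sum -sumrB.
by apply: eq_bigr => k _; rewrite !mxE; case: (M i k) => a b; case: (N k j).
Qed.
Lemma mIm_mul (R : realType) p q r (M : 'M[R[i]]_(p, q)) (N : 'M[R[i]]_(q, r)) :
  mIm (M *m N) = mRe M *m mIm N + mIm M *m mRe N.
Proof.
apply/matrixP => i j; rewrite !mxE Im_sum -big_split.
by apply: eq_bigr => k _; rewrite !mxE; case: (M i k) => a b; case: (N k j).
Qed.

Lemma ReIm_eq (R : realType) p q (M N : 'M[R[i]]_(p, q)) :
  mRe M = mRe N -> mIm M = mIm N -> M = N.
Proof.
move=> /matrixP h1 /matrixP h2; apply/matrixP => i j.
move: (h1 i j) (h2 i j); rewrite !mxE.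
by case: (M i j) => a b; case: (N i j) => c d /= -> ->.
Qed.

Lemma mRe0 (R : realType) p q : mRe (0 : 'M[R[i]]_(p, q)) = 0.
Proof. by apply/matrixP => i j; rewrite !mxE. Qed.
Lemma mIm0 (R : realType) p q : mIm (0 : 'M[R[i]]_(p, q)) = 0.
Proof. by apply/matrixP => i j; rewrite !mxE. Qed.

Lemma Re_int (R : realType) (z : int) : complex.Re (z%:~R : R[i]) = z%:~R.
Proof.
have -> : (z%:~R : R[i]) = real_complex R (z%:~R) by rewrite rmorph_int.
by [].
Qed.
Lemma Im_int (R : realType) (z : int) : complex.Im (z%:~R : R[i]) = 0.
Proof.
have -> : (z%:~R : R[i]) = real_complex R (z%:~R) by rewrite rmorph_int.
by [].
Qed.

Lemma mRe_cmx (R : realType) p q (A : 'M[int]_(p, q)) :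
  mRe (cmx_of_int R A) = intR R A.
Proof. by apply/matrixP => i j; rewrite !mxE Re_int. Qed.
Lemma mIm_cmx (R : realType) p q (A : 'M[int]_(p, q)) :
  mIm (cmx_of_int R A) = 0.
Proof. by apply/matrixP => i j; rewrite !mxE Im_int. Qed.
Lemma mRe_imx (R : realType) n (Y : 'M[R]_n) : mRe (imx Y) = 0.
Proof. by apply/matrixP => i j; rewrite !mxE. Qed.
Lemma mIm_imx (R : realType) n (Y : 'M[R]_n) : mIm (imx Y) = Y.
Proof. by apply/matrixP => i j; rewrite !mxE. Qed.

Lemma cmxM (R : realType) p q r (A : 'M[int]_(p, q)) (B : 'M[int]_(q, r)) :
  cmx_of_int R (A *m B) = cmx_of_int R A *m cmx_of_int R B.
Proof. exact: map_mxM. Qed.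
Lemma intRM (R : realType) p q r (A : 'M[int]_(p, q)) (B : 'M[int]_(q, r)) :
  intR R (A *m B) = intR R A *m intR R B.
Proof. exact: map_mxM. Qed.

Lemma intR_Jmx (R : realType) n : intR R (Jmx int n) = Jmx R n.
Proof. by rewrite /intR /Jmx map_block_mx map_mx0 map_mxN map_mx1. Qed.

Lemma intR_sympl (R : realType) n (g : 'M[int]_(n + n)) :
  symplectic g -> symplectic (intR R g).
Proof.
by rewrite /symplectic => h; rewrite -intR_Jmx /intR map_trmx -!map_mxM h.
Qed.

Lemma ker_unit (F : fieldType) n (E : 'M[F]_n) :
  (forall v : 'cV[F]_n, E *m v = 0 -> v = 0) -> E \in unitmx.
Proof.
move=> hk; rewrite -unitmx_tr -row_free_unit -kermx_eq0; apply/eqP/row_matrixP => i.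
rewrite row0; set w := row i _.
have hw : w *m E^T = 0 by rewrite /w -row_mul mulmx_ker row0.
apply: trmx_inj; rewrite trmx0; apply: hk.
by rewrite -[E]trmxK -trmx_mul hw trmx0.
Qed.

Definition qf (R : realType) n (Y : 'M[R]_n) (v : 'cV[R]_n) : R :=
  (v^T *m Y *m v) 0 0.

Lemma qf_ge0 (R : realType) n (Y : 'M[R]_n) v : posdef Y -> 0 <= qf Y v.
Proof.
case=> _ hp; have [->|nz] := eqVneq v 0.
  by rewrite /qf mulmx0 mxE.
exact/ltW/hp.
Qed.

Lemma qf_eq0 (R : realType) n (Y : 'M[R]_n) v : posdef Y -> qf Y v = 0 -> v = 0.
Proof.
case=> _ hp h; apply/eqP; apply/negPn/negP => nz.
by move: (hp v nz); rewrite -/(qf Y v) h ltxx.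
Qed.

Lemma sympl_bot0 (T : comPzRingType) n (G : 'M[T]_(n + n)) (x y : 'cV[T]_(n + n)) :
  symplectic G -> dsubmx (G *m x) = 0 -> dsubmx (G *m y) = 0 ->
  x^T *m Jmx T n *m y = 0.
Proof.
rewrite /symplectic => hG hx hy.
rewrite -hG !mulmxA -trmx_mul -!mulmxA mulmxA.
rewrite -[G *m x]vsubmxK -[G *m y]vsubmxK hx hy /Jmx tr_col_mx trmx0.
by rewrite mul_row_block mul_row_col !mulmx0 !mul0mx ?addr0 ?add0r ?mul0mx.
Qed.

Lemma dsub_mul (T : pzRingType) n (G : 'M[T]_(n + n)) (u d : 'cV[T]_n) :
  dsubmx (G *m col_mx u d) = dlsubmx G *m u + drsubmx G *m d.
Proof. by rewrite -{1}[G]submxK mul_block_col col_mxKd. Qed.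

Lemma unit_bottom (R : realType) n (g : 'M[int]_(n + n)) (Y : 'M[R]_n) :
  symplectic g -> posdef Y ->
  dlsubmx (cmx_of_int R g) *m imx Y + drsubmx (cmx_of_int R g) \in unitmx.
Proof.
move=> hs hY; apply: ker_unit => v hv.
set a := mRe v; set b := mIm v.
set G := intR R g.
have hG : symplectic G by exact: intR_sympl.
have hRe : drsubmx G *m a - dlsubmx G *m (Y *m b) = 0.
  move: (congr1 (@mRe R _ _) hv).
  rewrite mRe0 mRe_mul mIm_add mRe_add mRe_mul mIm_mul.
  rewrite -!map_dlsubmx -!map_drsubmx -/(cmx_of_int R _) !mRe_cmx !mIm_cmx mRe_imx mIm_imx.
  rewrite !mul0mx !mulmx0 !subr0 !add0r !addr0 /G /intR map_dlsubmx map_drsubmx.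
  by move=> <-; rewrite mulmxA.
have hIm : drsubmx G *m b + dlsubmx G *m (Y *m a) = 0.
  move: (congr1 (@mIm R _ _) hv).
  rewrite mIm0 mIm_mul mIm_add mRe_add mRe_mul mIm_mul.
  rewrite -!map_dlsubmx -!map_drsubmx -/(cmx_of_int R _) !mRe_cmx !mIm_cmx mRe_imx mIm_imx.
  rewrite !mul0mx !mulmx0 !subr0 !add0r !addr0 /G /intR map_dlsubmx map_drsubmx.
  by move=> <-; rewrite mulmxA addrC.
have h0 := sympl_bot0 (x := col_mx (- (Y *m b)) a) (y := col_mx (Y *m a) b) hG.
rewrite !dsub_mul in h0.
have h1 : (col_mx (- (Y *m b)) a)^T *m Jmx R n *m col_mx (Y *m a) b = 0.
  by apply: h0; [rewrite mulmxN addrC; exact: hRe | rewrite addrC; exact: hIm].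
move: h1.
rewrite /Jmx tr_col_mx mul_row_block mul_row_col !mulmx0 !addr0 !add0r.
rewrite mulmxN !mulmx1 !mulNmx linearN /= mulNmx trmx_mul.
case: hY => hYt hYp; rewrite hYt -opprD !mulmxA => /eqP; rewrite oppr_eq0 => /eqP h1.
have hq : qf Y a + qf Y b = 0.
  by move/matrixP: h1 => /(_ 0 0); rewrite [in X in X = _]mxE [in X in _ = X]mxE.
have hY : posdef Y by split.
have qa := qf_ge0 a hY; have qb := qf_ge0 b hY.
have ha : qf Y a = 0 by apply/le_anti; rewrite qa andbT -hq lerDl.
have hb : qf Y b = 0 by apply/le_anti; rewrite qb andbT -hq lerDr.
move: (qf_eq0 hY ha) (qf_eq0 hY hb) => a0 b0.
by apply: ReIm_eq; rewrite ?mRe0 ?mIm0 -?/a -?/b ?a0 ?b0.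
Qed.

Definition topm (T : pzRingType) n (G : 'M[T]_(n + n)) (W : 'M[T]_n) :=
  ulsubmx G *m W + ursubmx G.
Definition botm (T : pzRingType) n (G : 'M[T]_(n + n)) (W : 'M[T]_n) :=
  dlsubmx G *m W + drsubmx G.
Definition act (T : comUnitRingType) n (G : 'M[T]_(n + n)) (W : 'M[T]_n) :=
  topm G W *m invmx (botm G W).

Lemma mul_sub (T : pzRingType) n (G H : 'M[T]_(n + n)) :
  G *m H = block_mx (ulsubmx G *m ulsubmx H + ursubmx G *m dlsubmx H)
                    (ulsubmx G *m ursubmx H + ursubmx G *m drsubmx H)
                    (dlsubmx G *m ulsubmx H + drsubmx G *m dlsubmx H)
                    (dlsubmx G *m ursubmx H + drsubmx G *m drsubmx H).
Proof. by rewrite -{1}[G]submxK -{1}[H]submxK mulmx_block. Qed.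

Lemma topm_mul (T : pzRingType) n (G H : 'M[T]_(n + n)) W :
  topm (G *m H) W = ulsubmx G *m topm H W + ursubmx G *m botm H W.
Proof.
rewrite /topm /botm (mul_sub G H) block_mxKul block_mxKur.
rewrite !mulmxDl !mulmxDr !mulmxA.
by rewrite addrACA.
Qed.
Lemma botm_mul (T : pzRingType) n (G H : 'M[T]_(n + n)) W :
  botm (G *m H) W = dlsubmx G *m topm H W + drsubmx G *m botm H W.
Proof.
rewrite /topm /botm (mul_sub G H) block_mxKdl block_mxKdr.
rewrite !mulmxDl !mulmxDr !mulmxA.
by rewrite addrACA.
Qed.

Lemma act_comp (T : comUnitRingType) n (G H : 'M[T]_(n + n)) W :
  botm H W \in unitmx -> botm (G *m H) W \in unitmx ->
  botm G (act H W) \in unitmx /\ act G (act H W) = act (G *m H) W.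
Proof.
move=> hH hGH.
have ht : topm H W = act H W *m botm H W by rewrite /act mulmxKV.
have e1 : topm (G *m H) W = topm G (act H W) *m botm H W.
  by rewrite topm_mul ht /topm mulmxDl !mulmxA.
have e2 : botm (G *m H) W = botm G (act H W) *m botm H W.
  by rewrite botm_mul ht /botm mulmxDl !mulmxA.
have hu : botm G (act H W) \in unitmx by move: hGH; rewrite e2 unitmx_mul => /andP[].
split => //.
rewrite -[act G (act H W)](mulmxK hGH) e2 mulmxA.
by rewrite [act G (act H W)]/act mulmxKV // -e1 -e2.
Qed.

Lemma act1 (T : comUnitRingType) n (W : 'M[T]_n) : act 1%:M W = W.
Proof.
rewrite /act /topm /botm [1%:M]scalar_mx_block block_mxKul block_mxKur block_mxKdl block_mxKdr.
by rewrite mul1mx mul0mx addr0 add0r invmx1 mulmx1.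
Qed.

Definition bf (R : realType) n (Y : 'M[R]_n) (u v : 'cV[R]_n) : R :=
  (u^T *m Y *m v) 0 0.

Lemma bf_sym (R : realType) n (Y : 'M[R]_n) u v : Y^T = Y -> bf Y u v = bf Y v u.
Proof.
move=> hY; rewrite /bf -[in LHS](trmxK (u^T *m Y *m v)) [in LHS]mxE.
by rewrite !trmx_mul trmxK hY mulmxA.
Qed.

Lemma bfDr (R : realType) n (Y : 'M[R]_n) u v w : bf Y u (v + w) = bf Y u v + bf Y u w.
Proof. by rewrite /bf mulmxDr mxE. Qed.
Lemma bfZr (R : realType) n (Y : 'M[R]_n) u v (c : R) : bf Y u (c *: v) = c * bf Y u v.
Proof. by rewrite /bf -scalemxAr mxE. Qed.
Lemma bfDl (R : realType) n (Y : 'M[R]_n) u v w : bf Y (v + w) u = bf Y v u + bf Y w u.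
Proof. by rewrite /bf linearD /= !mulmxDl mxE. Qed.
Lemma bfZl (R : realType) n (Y : 'M[R]_n) u v (c : R) : bf Y (c *: v) u = c * bf Y v u.
Proof. by rewrite /bf linearZ /= -!scalemxAl mxE. Qed.
Lemma bf0r (R : realType) n (Y : 'M[R]_n) u : bf Y u 0 = 0.
Proof. by rewrite /bf mulmx0 mxE. Qed.

Lemma bf_quad (R : realType) n (Y : 'M[R]_n) u v (x y : R) : Y^T = Y ->
  bf Y (x *: u + y *: v) (x *: u + y *: v) =
  x ^+ 2 * bf Y u u + 2 * x * y * bf Y u v + y ^+ 2 * bf Y v v.
Proof.
move=> hY; rewrite !bfDl !bfDr !bfZl !bfZr (bf_sym v u hY).
ring.
Qed.

Lemma CS (R : realType) n (S : 'M[R]_n) u v : S^T = S -> (forall w, 0 <= bf S w w) ->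
  bf S u v ^+ 2 <= bf S u u * bf S v v.
Proof.
move=> hS hp.
set a := bf S u u; set b := bf S u v; set c := bf S v v.
have q x y : 0 <= x ^+ 2 * a + 2 * x * y * b + y ^+ 2 * c by rewrite -bf_quad.
have ha : 0 <= a := hp u. have hc : 0 <= c := hp v.
have P1 := q c (- b). have P2 := q b (- a). have P3 := q 1 (- b).
have [c0|cpos] := eqVneq c 0.
  have [a0|apos] := eqVneq a 0.
    rewrite a0 c0 in P3 *; nra.
  have apos' : 0 < a by rewrite lt0r apos.
  nra.
have cpos' : 0 < c by rewrite lt0r cpos.
nra.
Qed.

Lemma bfK (R : realType) n (Y K : 'M[R]_n) u v : K^T *m Y = Y *m K ->
  bf Y (K *m u) v = bf Y u (K *m v).
Proof.
move=> hK; rewrite /bf trmx_mul !mulmxA -(mulmxA u^T K^T Y) hK.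
by rewrite !mulmxA.
Qed.

Lemma decay_step (R : realType) n (Y K : 'M[R]_n) :
  posdef Y -> K^T *m Y = Y *m K ->
  (forall u, 0 <= bf Y u (K *m u)) -> (forall u, 4 * bf Y u (K *m u) <= bf Y u u) ->
  forall w, 16 * bf Y (K *m w) (K *m w) <= bf Y w w.
Proof.
move=> hY hK h1 h2 w.
have hYt : Y^T = Y by case: hY.
set S := Y *m K.
have hS : S^T = S by rewrite /S trmx_mul hYt hK.
have bfS x y : bf S x y = bf Y x (K *m y) by rewrite /bf /S !mulmxA.
have hSp : forall x, 0 <= bf S x x by move=> x; rewrite bfS.
have hcs := CS (K *m w) w hS hSp.
rewrite !bfS in hcs.
rewrite [bf Y (K *m w) (K *m w)]bfK // in hcs *.
have ht : 0 <= bf Y w (K *m (K *m w)) by rewrite -bfK //; exact: qf_ge0.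
have hu := h2 (K *m w).
rewrite [bf Y (K *m w) (K *m w)]bfK // in hu.
have hu0 := h1 (K *m w).
have hs := h2 w. have hs0 := h1 w.
set t := bf Y w (K *m (K *m w)) in hcs ht hu *.
set s := bf Y w (K *m w) in hcs hs hs0 *.
set r := bf Y (K *m w) (K *m (K *m w)) in hcs hu hu0 *.
have [t0|tpos] := eqVneq t 0.
  rewrite t0; nra.
have tpos' : 0 < t by rewrite lt0r tpos.
nra.
Qed.

Definition pw (T : pzRingType) n (K : 'M[T]_n) (j : nat) (u : 'cV[T]_n) :=
  iter j (mulmx K) u.

Lemma decay (R : realType) n (Y K : 'M[R]_n) :
  posdef Y -> K^T *m Y = Y *m K ->
  (forall u, 0 <= bf Y u (K *m u)) -> (forall u, 4 * bf Y u (K *m u) <= bf Y u u) ->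
  forall j w, 16 ^+ j * bf Y (pw K j w) (pw K j w) <= bf Y w w.
Proof.
move=> hY hK h1 h2; elim=> [|j IH] w; first by rewrite expr0 mul1r.
rewrite /pw iterS -/(pw K j w) exprS -mulrA.
apply: le_trans (IH w).
have hp : 0 <= (16 : R) ^+ j by rewrite exprn_ge0.
rewrite mulrA [16 * _]mulrC -mulrA; apply: ler_wpM2l => //.
exact: decay_step.
Qed.

Lemma posdef_unit (R : realType) n (Y : 'M[R]_n) : posdef Y -> Y \in unitmx.
Proof.
move=> hY; apply: ker_unit => v hv; apply: (qf_eq0 hY).
by rewrite /qf -mulmxA hv mulmx0 mxE.
Qed.

Lemma coord_bound (R : realType) n (Y : 'M[R]_n) (v : 'cV[R]_n) i :
  posdef Y ->
  (v i 0) ^+ 2 <= bf Y (invmx Y *m delta_mx i 0) (invmx Y *m delta_mx i 0) * bf Y v v.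
Proof.
move=> hY; have [hYt hYp] := hY.
have -> : v i 0 = bf Y (invmx Y *m delta_mx i 0) v.
  rewrite /bf trmx_mul trmx_inv hYt -!mulmxA (mulmxA (invmx Y)) mulVmx ?posdef_unit //.
  by rewrite mul1mx trmx_delta -rowE mxE.
apply: CS => // w; exact: qf_ge0.
Qed.

Lemma pwD (T : pzRingType) n (K : 'M[T]_n) a b u : pw K (a + b) u = pw K a (pw K b u).
Proof. by rewrite /pw iterD. Qed.

Lemma pw0v (T : pzRingType) n (K : 'M[T]_n) a : pw K a 0 = 0.
Proof. by elim: a => // a IH; rewrite /pw iterS -/(pw K a 0) IH mulmx0. Qed.

Lemma bf_pw (R : realType) n (Y K : 'M[R]_n) j u v : K^T *m Y = Y *m K ->
  bf Y (pw K j u) v = bf Y u (pw K j v).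
Proof.
move=> hK; elim: j u v => // j IH u v.
rewrite /pw iterS -/(pw K j u) bfK // IH.
by rewrite /pw -iterSr iterS.
Qed.

Lemma nil_red (R : realType) n (Y K : 'M[R]_n) : posdef Y -> K^T *m Y = Y *m K ->
  forall s, (forall k, pw K s.+1 (delta_mx k 0) = 0) -> forall k, K *m (delta_mx k 0 : 'cV[R]_n) = 0.
Proof.
move=> hY hK; elim=> [|s IH] h; first exact: h.
apply: IH => k; apply: (qf_eq0 hY).
rewrite /qf -/(bf Y _ _) bf_pw //.
have -> : pw K s.+1 (pw K s.+1 (delta_mx k 0 : 'cV[R]_n)) = pw K s (pw K s.+2 (delta_mx k 0)).
  by rewrite -!pwD addSnnS addnC.
by rewrite h pw0v bf0r.
Qed.

Lemma intR_pw (R : realType) n (N : 'M[int]_n) j u :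
  intR R (pw N j u) = pw (intR R N) j (intR R u).
Proof.
elim: j => // j IH; rewrite /pw !iterS -/(pw N j u) -/(pw (intR R N) j _).
by rewrite intRM IH.
Qed.

Lemma le_sum1 (R : realType) (I : finType) (F : I -> R) i0 :
  (forall i, 0 <= F i) -> F i0 <= \sum_i F i.
Proof. by move=> h; rewrite (bigD1 i0) //= lerDl sumr_ge0. Qed.

Lemma int_sq_lt1 (z : int) : z ^+ 2 < 1 -> z = 0.
Proof. rewrite expr2; nia. Qed.

Lemma intRE (R : realType) p q (A : 'M[int]_(p, q)) i j : intR R A i j = (A i j)%:~R.
Proof. by rewrite mxE. Qed.

Lemma lemL (R : realType) n (Y : 'M[R]_n) (N : 'M[int]_n) :
  posdef Y -> (intR R N)^T *m Y = Y *m intR R N ->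
  (forall u, 0 <= bf Y u (intR R N *m u)) ->
  (forall u, 4 * bf Y u (intR R N *m u) <= bf Y u u) -> N = 0.
Proof.
move=> hY hK h1 h2; set K := intR R N in hK h1 h2.
pose w (i : 'I_n) : 'cV[R]_n := invmx Y *m delta_mx i 0.
pose e (k : 'I_n) : 'cV[R]_n := delta_mx k 0.
pose c := \sum_i \sum_k bf Y (w i) (w i) * bf Y (e k) (e k).
have hF : forall i k, 0 <= bf Y (w i) (w i) * bf Y (e k) (e k).
  by move=> i k; apply: mulr_ge0; apply: qf_ge0.
have c0 : 0 <= c by apply: sumr_ge0 => i _; apply: sumr_ge0 => k _.
have hj := archi_boundP c0; set j := Num.Def.archi_bound c in hj.
have hj16 : (j%:R : R) <= 16 ^+ j.
  by rewrite -natrX ler_nat; apply: ltnW; apply: ltn_expl.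
clearbody j.
have he : forall k, e k = intR R (delta_mx k 0).
  by move=> k; apply/matrixP => a b; rewrite !mxE; case: eqP; case: eqP.
have hpw : forall k, pw K j (e k) = 0.
  move=> k; apply/matrixP => i l; rewrite (ord1 l) [X in _ = X]mxE.
  have cb := coord_bound (pw K j (e k)) i hY.
  rewrite [in X in X = _]he /K -intR_pw intRE; apply/eqP; rewrite intr_eq0; apply/eqP.
  have hz : pw K j (e k) i 0 = (pw N j (delta_mx k 0) i 0)%:~R by rewrite he /K -intR_pw intRE.
  rewrite hz in cb.
  apply: int_sq_lt1.
  rewrite -(ltr_int R) rmorphXn /=.
  have dk := decay hY hK h1 h2 j (e k).
  have hc : bf Y (w i) (w i) * bf Y (e k) (e k) <= c.
    apply: le_trans (le_sum1 i _); first by apply: le_sum1 => k'; apply: hF.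
    by move=> i'; apply: sumr_ge0 => k' _.
  have p16 : 0 < (16 : R) ^+ j by rewrite exprn_gt0.
  have hw0 : 0 <= bf Y (w i) (w i) by apply: qf_ge0.
  set z := _%:~R in cb *.
  set q := bf Y (pw K j (e k)) (pw K j (e k)) in cb dk.
  rewrite -/(w i) in cb.
  set a := bf Y (w i) (w i) in cb hc hw0.
  set b := bf Y (e k) (e k) in dk hc.
  set P := (16 : R) ^+ j in dk p16 hj16.
  have : P * z ^+ 2 < P * 1.
    apply: le_lt_trans (_ : a * b < P * 1); last by rewrite mulr1; lra.
    apply: le_trans (_ : P * (a * q) <= a * b).
      by apply: ler_wpM2l => //; lra.
    rewrite mulrCA; apply: ler_wpM2l => //.
  by rewrite ltr_pM2l.
case: j hj hj16 hpw => [|s] hj _ hpw; first by move: hj; rewrite ltNge c0.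
have hK0 := nil_red hY hK hpw.
apply/matrixP => a b; rewrite mxE.
have := congr1 (fun M : 'cV[R]_n => M a 0) (hK0 b).
by rewrite /= -colE !mxE => /eqP; rewrite intr_eq0 => /eqP.
Qed.

Lemma J2 (T : pzRingType) n : Jmx T n *m Jmx T n = - 1%:M.
Proof.
rewrite /Jmx mulmx_block !mulmx0 !mul0mx !mulmx1 !mulmxN !mulmx1 !addr0 !add0r.
by rewrite scalar_mx_block opp_block_mx !oppr0.
Qed.

Definition ginv (T : comPzRingType) n (g : 'M[T]_(n + n)) : 'M[T]_(n + n) :=
  - (Jmx T n *m g^T *m Jmx T n).

Lemma ginvK (T : comPzRingType) n (g : 'M[T]_(n + n)) : symplectic g -> ginv g *m g = 1%:M.
Proof.
move=> hg; rewrite /ginv mulNmx -!mulmxA [g^T *m _]mulmxA hg J2 opprK //.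
Qed.

Lemma ginvKV (T : comPzRingType) n (g : 'M[T]_(n + n)) : symplectic g -> g *m ginv g = 1%:M.
Proof. by move=> hg; apply: mulmx1C; apply: ginvK. Qed.

Lemma sympl_mul (T : comPzRingType) n (a b : 'M[T]_(n + n)) :
  symplectic a -> symplectic b -> symplectic (a *m b).
Proof.
rewrite /symplectic => ha hb; rewrite trmx_mul.
have -> : b^T *m a^T *m Jmx T n *m (a *m b) = b^T *m (a^T *m Jmx T n *m a) *m b.
  by rewrite !mulmxA.
by rewrite ha.
Qed.

Lemma sympl_ginv (T : comPzRingType) n (g : 'M[T]_(n + n)) :
  symplectic g -> symplectic (ginv g).
Proof.
move=> hg; have e := hg; rewrite /symplectic in e *.
set G := ginv g.
have -> : G^T *m Jmx T n *m G = G^T *m (g^T *m Jmx T n *m g) *m G by rewrite e.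
have -> : G^T *m (g^T *m Jmx T n *m g) *m G = (g *m G)^T *m Jmx T n *m (g *m G).
  by rewrite trmx_mul !mulmxA.
by rewrite /G ginvKV // trmx1 mul1mx mulmx1.
Qed.

Lemma sympl_ur (T : comPzRingType) n (g : 'M[T]_(n + n)) : symplectic g ->
  (ulsubmx g)^T *m drsubmx g - (dlsubmx g)^T *m ursubmx g = 1%:M.
Proof.
rewrite /symplectic => hg.
have := congr1 (@ursubmx _ n n n n) hg.
rewrite -{1 2}[g]submxK tr_block_mx /Jmx !mulmx_block block_mxKur.
rewrite ?mulmx0 ?mul0mx ?mulmx1 ?mulmxN ?mulmx1 ?addr0 ?add0r.
by rewrite block_mxKur mulNmx addrC.
Qed.

Definition m2 p q (A : 'M[int]_(p, q)) : 'M['F_2]_(p, q) := map_mx (fun z : int => z%:~R) A.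

Lemma cong2P (a b : int) : (a = b %[mod 2])%Z <-> (a%:~R = b%:~R :> 'F_2).
Proof.
have hc : (2%N \in [pchar 'F_2]) := pchar_Fp (isT : prime 2).
split.
  move/eqP; rewrite eqz_mod_dvd (dvdz_pcharf hc) intrB subr_eq0 => /eqP //.
move=> h; apply/eqP; rewrite eqz_mod_dvd (dvdz_pcharf hc) intrB h subrr //.
Qed.

Lemma mxcong2P p q (A B : 'M[int]_(p, q)) : mxcong 2 A B <-> m2 A = m2 B.
Proof.
split.
  by move=> h; apply/matrixP => i j; rewrite !mxE; apply/cong2P; apply: h.
by move=> /matrixP h i j; apply/cong2P; move: (h i j); rewrite !mxE.
Qed.

Lemma mxcong_dvd p q (k : int) (A B : 'M[int]_(p, q)) :
  (2 %| k)%Z -> mxcong k A B -> mxcong 2 A B.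
Proof.
move=> hk h i j; move: (h i j) => /eqP; rewrite eqz_mod_dvd => hd.
by apply/eqP; rewrite eqz_mod_dvd; apply: dvdz_trans hd.
Qed.

Lemma m2M p q r (A : 'M[int]_(p, q)) (B : 'M[int]_(q, r)) : m2 (A *m B) = m2 A *m m2 B.
Proof. exact: map_mxM. Qed.
Lemma m21 n : m2 (1%:M : 'M[int]_n) = 1%:M.
Proof. exact: map_mx1. Qed.
Lemma m20 p q : m2 (0 : 'M[int]_(p, q)) = 0.
Proof. exact: map_mx0. Qed.

Lemma Gamma2_m2 n m (g : 'M[int]_(n + n)) : (1 <= m)%N -> Gamma_2m_2 m g -> m2 g = 1%:M.
Proof.
move=> hm [_ hA hD hB hC].
have d2 : (2 %| (2 * m)%N%:Z)%Z by rewrite PoszM dvdz_mulr.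
rewrite -[g]submxK /m2 map_block_mx -!/(m2 _).
move/mxcong2P: hA => ->; move/mxcong2P: hD => ->.
move/(mxcong_dvd d2)/mxcong2P: hB => ->; move/(mxcong_dvd d2)/mxcong2P: hC => ->.
by rewrite !m21 !m20 -scalar_mx_block.
Qed.

Lemma Gammap_m2 n m (g : 'M[int]_(n + n)) : Gamma_princ m g -> m2 g = 1%:M.
Proof.
move=> [_ hc]; have d2 : (2 %| (4 * m)%N%:Z)%Z.
  by rewrite (_ : 4 * m = 2 * (2 * m))%N ?mulnA // PoszM dvdz_mulr.
by move/(mxcong_dvd d2)/mxcong2P: hc => ->; rewrite m21.
Qed.

Lemma m2_ginv n (g : 'M[int]_(n + n)) : symplectic g -> m2 g = 1%:M -> m2 (ginv g) = 1%:M.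
Proof.
move=> s e.
have := congr1 (@m2 _ _) (ginvK s).
by rewrite m2M e mulmx1 m21.
Qed.

Lemma real_eqs (R : realType) n (g : 'M[int]_(n + n)) (Y1 Y2 : 'M[R]_n) :
  topm (cmx_of_int R g) (imx Y1) = imx Y2 *m botm (cmx_of_int R g) (imx Y1) ->
  intR R (ursubmx g) = - (Y2 *m (intR R (dlsubmx g) *m Y1)) /\
  intR R (ulsubmx g) *m Y1 = Y2 *m intR R (drsubmx g).
Proof.
move=> e; split.
  move: (congr1 (@mRe R _ _) e); rewrite /topm /botm.
  rewrite mRe_mul mIm_add mRe_add mRe_mul mIm_mul mRe_add mRe_mul.
  rewrite -!map_dlsubmx -!map_drsubmx -!map_ulsubmx -!map_ursubmx -/(cmx_of_int R _).
  rewrite !mRe_cmx !mIm_cmx !mRe_imx !mIm_imx.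
  by rewrite !mul0mx !mulmx0 !subr0 !add0r !addr0 /intR ?sub0r.
move: (congr1 (@mIm R _ _) e); rewrite /topm /botm.
rewrite mIm_mul mIm_add mRe_add mRe_mul mIm_mul mIm_add mIm_mul.
rewrite -!map_dlsubmx -!map_drsubmx -!map_ulsubmx -!map_ursubmx -/(cmx_of_int R _).
rewrite !mRe_cmx !mIm_cmx !mRe_imx !mIm_imx.
by rewrite !mul0mx !mulmx0 !subr0 !add0r !addr0 /intR.
Qed.

Definition half p q (A : 'M[int]_(p, q)) : 'M[int]_(p, q) := map_mx (fun z => (z %/ 2)%Z) A.

Lemma half2 (R : realType) p q (A : 'M[int]_(p, q)) :
  mxcong 2 A 0 -> intR R A = 2 *: intR R (half A).
Proof.
move=> h; apply/matrixP => i j; rewrite !mxE.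
move: (h i j) => /eqP; rewrite eqz_mod_dvd mxE subr0 => /divzK {1}<-.
by rewrite intrM mulrC.
Qed.

Lemma mx_ker0 (R : realType) p n (A : 'M[R]_(p, n)) :
  (forall u : 'cV[R]_n, A *m u = 0) -> A = 0.
Proof.
move=> h; apply/matrixP => i j.
by have := congr1 (fun M : 'cV[R]_p => M i 0) (h (delta_mx j 0)); rewrite /= -colE !mxE.
Qed.

Lemma intR_inj0 (R : realType) p q (A : 'M[int]_(p, q)) : intR R A = 0 -> A = 0.
Proof.
move=> /matrixP h; apply/matrixP => i j; move: (h i j); rewrite !mxE => /eqP.
by rewrite intr_eq0 => /eqP.
Qed.

Lemma bf_mat (R : realType) n (Y P : 'M[R]_n) u : bf Y u (P *m u) = (u^T *m (Y *m P) *m u) 0 0.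
Proof. by rewrite /bf !mulmxA. Qed.

Lemma quad_tr (R : realType) p n (X : 'M[R]_(p, n)) (Y : 'M[R]_p) u :
  (u^T *m (X^T *m Y *m X) *m u) 0 0 = qf Y (X *m u).
Proof. by rewrite /qf trmx_mul !mulmxA. Qed.

Lemma intR1 (R : realType) n : intR R (1%:M : 'M[int]_n) = 1%:M.
Proof. exact: map_mx1. Qed.
Lemma intR_tr (R : realType) p q (A : 'M[int]_(p, q)) : intR R A^T = (intR R A)^T.
Proof. by rewrite /intR map_trmx. Qed.
Lemma intRB (R : realType) p q (A B : 'M[int]_(p, q)) : intR R (A - B) = intR R A - intR R B.
Proof. by apply/matrixP => i j; rewrite !mxE intrB. Qed.
Lemma intRN (R : realType) p q (A : 'M[int]_(p, q)) : intR R (- A) = - intR R A.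
Proof. by apply/matrixP => i j; rewrite !mxE intrN. Qed.

Lemma bfBr (R : realType) n (Y : 'M[R]_n) u v w : bf Y u (v - w) = bf Y u v - bf Y u w.
Proof. by rewrite -scaleN1r bfDr bfZr mulN1r. Qed.

Lemma core (R : realType) n (A B C D : 'M[int]_n) (Y1 Y2 : 'M[R]_n) :
  posdef Y1 -> posdef Y2 ->
  intR R B = - (Y2 *m (intR R C *m Y1)) ->
  intR R A *m Y1 = Y2 *m intR R D ->
  A^T *m D - C^T *m B = 1%:M ->
  mxcong 2 B 0 -> mxcong 2 C 0 -> C = 0 /\ B = 0.
Proof.
move=> hY1 hY2 eB eA hs hB hC.
have [hY1t _] := hY1; have [hY2t _] := hY2.
set AR := intR R A in eA; set BR := intR R B in eB; set CR := intR R C in eB.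
set DR := intR R D in eA.
set N := - ((half C)^T *m half B).
set K := intR R N.
have e4 : 4 *: K = - (CR^T *m BR).
  rewrite /K /N intRN intRM intR_tr /BR /CR (half2 R hB) (half2 R hC).
  rewrite linearZ /= linearZ /= [X in _ = _ *: - (X *m _)]linearZ /= -scalemxAl.
  rewrite !scalerN scalerA; congr (- (_ *: _)).
  by rewrite -[4]/((2 * 2)%:R) natrM.
have hsR : AR^T *m DR - CR^T *m BR = 1%:M.
  by rewrite /AR /BR /CR /DR -!intR_tr -!intRM -intRB hs intR1.
set X := CR *m Y1.
set Mt := X^T *m Y2 *m X.
have F1 : Y1 *m (4 *: K) = Mt.
  by rewrite e4 eB !mulmxN opprK /Mt /X trmx_mul hY1t !mulmxA.
have F2 : Y1 *m (1%:M - 4 *: K) = DR^T *m Y2 *m DR.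
  have -> : 1%:M - 4 *: K = AR^T *m DR by rewrite e4 opprK -hsR subrK.
  by rewrite mulmxA -{1}hY1t -trmx_mul eA trmx_mul hY2t.
have hMt : Mt^T = Mt.
  by rewrite /Mt /X !trmx_mul !trmxK hY2t !mulmxA.
have hK : K^T *m Y1 = Y1 *m K.
  apply: (@scalerI _ _ 4); first by rewrite pnatr_eq0.
  have e : (Y1 *m (4 *: K))^T = Y1 *m (4 *: K) by rewrite F1 hMt.
  rewrite trmx_mul hY1t in e.
  by rewrite [RHS]scalemxAr -e linearZ /= scalemxAl.
have h1 : forall u, 0 <= bf Y1 u (K *m u).
  move=> u; have : 0 <= 4 * bf Y1 u (K *m u).
    by rewrite -bfZr scalemxAl bf_mat F1 quad_tr; apply: qf_ge0.
  by rewrite pmulr_rge0.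
have h2 : forall u, 4 * bf Y1 u (K *m u) <= bf Y1 u u.
  move=> u; rewrite -subr_ge0.
  have -> : bf Y1 u u - 4 * bf Y1 u (K *m u) = bf Y1 u ((1%:M - 4 *: K) *m u).
    by rewrite mulmxBl mul1mx bfBr -scalemxAl bfZr.
  by rewrite bf_mat F2 quad_tr; apply: qf_ge0.
have N0 := lemL hY1 hK h1 h2.
have K0 : K = 0 by rewrite /K N0 /intR map_mx0.
have XY : X = 0.
  apply: mx_ker0 => u; apply: (qf_eq0 hY2).
  by rewrite -quad_tr -/Mt -F1 K0 scaler0 mulmx0 mulmx0 mul0mx mxE.
have C0 : C = 0.
  apply: (intR_inj0 (R := R)); rewrite -/CR.
  by rewrite -(mulmxK (posdef_unit hY1) CR) -/X XY mul0mx.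
split => //.
by apply: (intR_inj0 (R := R)); rewrite -/BR eB -/X XY mulmx0 oppr0.
Qed.

Lemma cmx1 (R : realType) n : cmx_of_int R (1%:M : 'M[int]_n) = 1%:M.
Proof. exact: map_mx1. Qed.

Lemma botm1 (T : comUnitRingType) n (W : 'M[T]_n) : botm 1%:M W \in unitmx.
Proof.
by rewrite /botm [1%:M]scalar_mx_block block_mxKdl block_mxKdr mul0mx add0r unitmx1.
Qed.

Unset Implicit Arguments.

Theorem lemma4p10 (R : realType) (n m : nat) (g1 g2 : 'M[int]_(n + n)) :
  (1 <= m)%N -> Gamma_2m_2 m g1 -> Gamma_2m_2 m g2 ->
  forall (Z1 Z2 : 'M[R[i]]_n) (gamma : 'M[int]_(n + n)),
    in_orbit_iC g1 Z1 -> in_orbit_iC g2 Z2 -> Gamma_princ m gamma ->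
    sp_act gamma Z1 = Z2 ->
  exists alpha : 'M[int]_n,
    Gamma_l_2 alpha /\ g2 = gamma *m g1 *m embedGL alpha.
Proof.
move=> hm hg1 hg2 Z1 Z2 ga [Y1 [hY1 eZ1]] [Y2 [hY2 eZ2]] hga hact.
have s1 : symplectic g1 by case: hg1.
have s2 : symplectic g2 by case: hg2.
have sga : symplectic ga by case: hga.
set h := ginv g2 *m (ga *m g1).
have sh : symplectic h := sympl_mul (sympl_ginv s2) (sympl_mul sga s1).
have eh : g2 *m h = ga *m g1 by rewrite /h mulmxA (ginvKV s2) mul1mx.
set W := imx Y1; set V := imx Y2.
have hb1 : botm (cmx_of_int R g1) W \in unitmx := unit_bottom s1 hY1.
have hbg : botm (cmx_of_int R ga *m cmx_of_int R g1) W \in unitmx.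
  by rewrite -cmxM; exact: (unit_bottom (sympl_mul sga s1) hY1).
have [_ c1] := act_comp hb1 hbg.
have e1 : act (cmx_of_int R (ga *m g1)) W = act (cmx_of_int R g2) V.
  by rewrite cmxM -c1; rewrite eZ1 eZ2 in hact; exact: hact.
have hbh : botm (cmx_of_int R h) W \in unitmx := unit_bottom sh hY1.
have hbg2h : botm (cmx_of_int R g2 *m cmx_of_int R h) W \in unitmx.
  by rewrite -cmxM eh cmxM.
have [hbX c2] := act_comp hbh hbg2h.
have [X eX] : exists X, X = act (cmx_of_int R h) W := ex_intro _ _ erefl.
rewrite -eX in hbX c2.
have e2 : act (cmx_of_int R g2) X = act (cmx_of_int R g2) V.
  by rewrite c2 -cmxM eh; exact: e1.
have hbV : botm (cmx_of_int R g2) V \in unitmx := unit_bottom s2 hY2.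
have hI : cmx_of_int R (ginv g2) *m cmx_of_int R g2 = 1%:M by rewrite -cmxM (ginvK s2) cmx1.
have hb1X : botm (cmx_of_int R (ginv g2) *m cmx_of_int R g2) X \in unitmx by rewrite hI botm1.
have hb1V : botm (cmx_of_int R (ginv g2) *m cmx_of_int R g2) V \in unitmx by rewrite hI botm1.
have [_ c3] := act_comp hbX hb1X; have [_ c4] := act_comp hbV hb1V.
have eXV : X = V by rewrite -(act1 X) -hI -c3 e2 c4 hI act1.
have htop : topm (cmx_of_int R h) W = V *m botm (cmx_of_int R h) W.
  by rewrite -eXV eX /act (mulmxKV hbh).
have [eB eA] := real_eqs htop.
have mg2 := Gamma2_m2 hm hg2; have mg1 := Gamma2_m2 hm hg1; have mga := Gammap_m2 hga.
have m2h : m2 h = 1%:M.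
  by rewrite /h !m2M (m2_ginv s2 mg2) mg1 mga !mul1mx.
have hB : mxcong 2 (ursubmx h) 0.
  by apply/mxcong2P; rewrite m20 /m2 map_ursubmx -/(m2 h) m2h [1%:M]scalar_mx_block block_mxKur.
have hC : mxcong 2 (dlsubmx h) 0.
  by apply/mxcong2P; rewrite m20 /m2 map_dlsubmx -/(m2 h) m2h [1%:M]scalar_mx_block block_mxKdl.
have hD : m2 (drsubmx h) = 1%:M.
  by rewrite /m2 map_drsubmx -/(m2 h) m2h [1%:M]scalar_mx_block block_mxKdr.
have [C0 B0] := core hY1 hY2 eB eA (sympl_ur sh) hB hC.
have hAD : (ulsubmx h)^T *m drsubmx h = 1%:M.
  by move: (sympl_ur sh); rewrite C0 B0 trmx0 mul0mx subr0.
have hh : h = block_mx (ulsubmx h) 0 0 (drsubmx h).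
  by rewrite -[in LHS](submxK h) C0 B0.
move: hAD hD hh; set A := ulsubmx h; set D := drsubmx h => hAD hD hh.
have hDu : D \in unitmx by case: (mulmx1_unit hAD).
have hinv : invmx D = A^T.
  by rewrite -[A^T]mulmx1 -(mulmxV hDu) mulmxA hAD mul1mx.
have hDA : D *m A^T = 1%:M := mulmx1C hAD.
exists D^T; split.
  split; first by rewrite unitmx_tr.
  by apply/mxcong2P; rewrite m21 /m2 -map_trmx -/(m2 D) hD trmx1.
rewrite -eh -mulmxA /embedGL trmxK hinv hh mulmx_block.
rewrite !mulmx0 !mul0mx !addr0 !add0r hDA.
have -> : A *m D^T = 1%:M by rewrite -[A]trmxK -trmx_mul hDA trmx1.
by rewrite -scalar_mx_block mulmx1.
Qed.
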